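(* Let $g$ be a regular expression over an alphabet of symbols, and let $x$ be a symbol that occurs exactly once (syntactically) in $g$. Let $\bar{x}_L, \bar{x}_R, \bar{y}_L, \bar{y}_R$ be finite (possibly empty) sequences of symbols. If $\bar{x}_L\, x\, \bar{y}_R \in [\![ g ]\!]$ and $\bar{y}_L\, x\, \bar{x}_R \in [\![ g ]\!]$, then $\bar{x}_L\, x\, \bar{x}_R \in [\![ g ]\!]$.
   Context: Regular expressions are generated by: the empty regex $\epsilon$; a single symbol $x_0$; alternation $g_L \mid g_R$; sequencing (concatenation) $g_L\, g_R$; and Kleene star $g_0^*$. The language $[\![ g ]\!]$ is the set of finite symbol sequences denoted by $g$ in the standard way: $[\![\epsilon]\!] = \{\text{empty sequence}\}$, $[\![x_0]\!]=\{x_0\}$, $[\![g_L\mid g_R]\!]=[\![g_L]\!]\cup[\![g_R]\!]$, $[\![g_L\,g_R]\!]$ is the set of concatenations $uv$ with $u\in[\![g_L]\!]$, $v\in[\![g_R]\!]$, and $[\![g_0^*]\!]=\bigcup_{n\ge 0}[\![g_0^n]\!]$ where $g_0^0=\epsilon$ and $g_0^{n+1}=g_0\,g_0^{n}$. Juxtaposition of sequences and symbols denotes concatenation. *)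

(* Defs.v *)
From Stdlib Require Import List.
Import ListNotations.

Inductive regex (A : Type) : Type :=
| Eps : regex A
| Sym : A -> regex A
| Alt : regex A -> regex A -> regex A
| Seq : regex A -> regex A -> regex A
| Star : regex A -> regex A.

Arguments Eps {A}.
Arguments Sym {A} _.
Arguments Alt {A} _ _.
Arguments Seq {A} _ _.
Arguments Star {A} _.

Fixpoint rpow {A : Type} (g : regex A) (n : nat) : regex A :=
  match n with
  | O => Eps
  | S n' => Seq g (rpow g n')
  end.

Inductive lang {A : Type} : regex A -> list A -> Prop :=
| lang_eps : lang Eps []
| lang_sym : forall x, lang (Sym x) [x]
| lang_altL : forall gL gR w, lang gL w -> lang (Alt gL gR) w
| lang_altR : forall gL gR w, lang gR w -> lang (Alt gL gR) w
| lang_seq : forall gL gR u v, lang gL u -> lang gR v -> lang (Seq gL gR) (u ++ v)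
| lang_star : forall g n w, lang (rpow g n) w -> lang (Star g) w.

Fixpoint occ {A : Type} (eqd : forall a b : A, {a = b} + {a <> b})
  (x : A) (g : regex A) : nat :=
  match g with
  | Eps => 0
  | Sym y => if eqd x y then 1 else 0
  | Alt gL gR => occ eqd x gL + occ eqd x gR
  | Seq gL gR => occ eqd x gL + occ eqd x gR
  | Star g0 => occ eqd x g0
  end.

(* Main.v *)
Require Import Defs.
From Stdlib Require Import List Lia.
Import ListNotations.

Section S.
Variable A : Type.
Variable eqd : forall a b : A, {a = b} + {a <> b}.
Variable x : A.

Lemma occ_rpow0 (g : regex A) n : occ eqd x g = 0 -> occ eqd x (rpow g n) = 0.
Proof. intros H; induction n; simpl; lia. Qed.

Lemma noocc g w : lang g w -> occ eqd x g = 0 -> ~ In x w.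
Proof.
  induction 1; simpl; intros Ho.
  - auto.
  - destruct (eqd x x0); [discriminate|]. intros [E|[]]; congruence.
  - apply IHlang; lia.
  - apply IHlang; lia.
  - rewrite in_app_iff. intros [I|I]; [apply IHlang1|apply IHlang2]; auto; lia.
  - apply IHlang. apply occ_rpow0; auto.
Qed.

Lemma split_r (u v l r : list A) : u ++ v = l ++ x :: r -> ~ In x v ->
  exists s, u = l ++ x :: s /\ r = s ++ v.
Proof.
  intros H N. apply app_eq_app in H. destruct H as [c [[Hu Hc]|[Hl Hv]]].
  - destruct c as [|a c]; simpl in Hc.
    + subst v. exfalso; apply N; left; auto.
    + injection Hc; intros; subst. eauto.
  - subst v. exfalso; apply N, in_elt.
Qed.

Lemma split_l (u v l r : list A) : u ++ v = l ++ x :: r -> ~ In x u ->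
  exists s, v = s ++ x :: r /\ l = u ++ s.
Proof.
  intros H N. apply app_eq_app in H. destruct H as [c [[Hu Hc]|[Hl Hv]]].
  - destruct c as [|a c]; simpl in Hc.
    + subst. exists []. rewrite !app_nil_r. auto.
    + injection Hc; intros; subst. exfalso; apply N, in_elt.
  - eauto.
Qed.

Lemma star_cons (g : regex A) a u : lang g a -> lang (Star g) u -> lang (Star g) (a ++ u).
Proof.
  intros Ha Hu. inversion Hu; subst. apply lang_star with (S n). simpl.
  constructor; auto.
Qed.

Lemma star_nil (g : regex A) : lang (Star g) [].
Proof. apply lang_star with 0. constructor. Qed.

Lemma star_app (g : regex A) u v : lang (Star g) u -> lang (Star g) v -> lang (Star g) (u ++ v).
Proof.
  intros Hu Hv. inversion Hu; subst. clear Hu. revert u H0.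
  induction n; simpl; intros u H.
  - inversion H; subst. auto.
  - inversion H; subst. rewrite <- app_assoc. apply star_cons; auto.
Qed.

Lemma rpow_dec (g : regex A) n : forall l r, lang (rpow g n) (l ++ x :: r) ->
  exists u l' r' v, l = u ++ l' /\ r = r' ++ v /\ lang (Star g) u /\
    lang g (l' ++ x :: r') /\ lang (Star g) v.
Proof.
  induction n; simpl; intros l r H.
  - inversion H. destruct l; discriminate.
  - inversion H; subst. match goal with | E: _ ++ _ = _ ++ _ , Hg : lang g _, Hn : lang (rpow g n) _ |- _ => rename E into E0; rename Hg into Hg0; rename Hn into Hn0 end. rename E0 into E, Hg0 into Hg, Hn0 into Hn.
    apply app_eq_app in E. destruct E as [c [[Hu Hc]|[Hl Hv]]].
    + destruct c as [|a c]; simpl in Hc.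
      * subst. rewrite app_nil_r in Hg.
        destruct (IHn [] r Hn) as (u' & l' & r' & v' & E1 & E2 & H1 & H2 & H3).
        destruct u'; [|discriminate]. destruct l'; [|discriminate]. simpl in *.
        exists l, [], r', v'. rewrite app_nil_r. repeat split; auto.
        try (rewrite <- (app_nil_r l); apply star_cons; auto; apply star_nil).
      * injection Hc; intros; subst. exists [], l, c, v. repeat split; auto.
        apply star_nil. apply lang_star with n; auto.
    + subst. destruct (IHn c r Hn) as (u' & l' & r' & v' & E1 & E2 & H1 & H2 & H3).
      subst. exists (u ++ u'), l', r', v'. repeat split; auto.
      rewrite app_assoc; auto. apply star_cons; auto.
Qed.

Lemma single (y : A) l r : [y] = l ++ x :: r -> l = [] /\ r = [] /\ y = x.
Proof.
  intros E. destruct l as [|a l]; simpl in E.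
  - injection E; intros; subst; auto.
  - injection E; intros E' _. destruct l; discriminate.
Qed.

Lemma inv_seq (gL gR : regex A) w : lang (Seq gL gR) w -> exists u v, w = u ++ v /\ lang gL u /\ lang gR v.
Proof. intros H; inversion H; subst; eauto. Qed.

Lemma inv_star (g : regex A) w : lang (Star g) w -> exists n, lang (rpow g n) w.
Proof. intros H; inversion H; subst; eauto. Qed.

Lemma main g : forall l1 r1 l2 r2, occ eqd x g = 1 ->
  lang g (l1 ++ x :: r1) -> lang g (l2 ++ x :: r2) -> lang g (l1 ++ x :: r2).
Proof.
  induction g as [|y|gL IHL gR IHR|gL IHL gR IHR|g0 IH]; simpl; intros l1 r1 l2 r2 Ho H1 H2.
  - discriminate.
  - destruct (eqd x y); [|discriminate]. subst y.
    inversion H1 as [|y0 E1| | | |]. inversion H2 as [|y1 E2| | | |].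
    destruct (single _ _ _ H) as (-> & -> & _). destruct (single _ _ _ H0) as (_ & -> & _).
    constructor.
  - assert (occ eqd x gL = 1 /\ occ eqd x gR = 0 \/ occ eqd x gL = 0 /\ occ eqd x gR = 1) as [[a b]|[a b]] by lia.
    + inversion H1; subst; [|exfalso; eapply noocc; eauto; apply in_elt].
      inversion H2; subst; [|exfalso; eapply noocc; eauto; apply in_elt].
      apply lang_altL; eauto.
    + inversion H1; subst; [exfalso; eapply noocc; eauto; apply in_elt|].
      inversion H2; subst; [exfalso; eapply noocc; eauto; apply in_elt|].
      apply lang_altR; eauto.
  - assert (occ eqd x gL = 1 /\ occ eqd x gR = 0 \/ occ eqd x gL = 0 /\ occ eqd x gR = 1) as [[a b]|[a b]] by lia.
    + destruct (inv_seq _ _ _ H1) as (u1 & v1 & E1 & P1 & Q1).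
      destruct (inv_seq _ _ _ H2) as (u2 & v2 & E2 & P2 & Q2).
      destruct (split_r _ _ _ _ (eq_sym E1) (noocc _ _ Q1 b)) as (s1 & F1 & G1).
      destruct (split_r _ _ _ _ (eq_sym E2) (noocc _ _ Q2 b)) as (s2 & F2 & G2). subst.
      replace (l1 ++ x :: s2 ++ v2) with ((l1 ++ x :: s2) ++ v2)
        by (rewrite <- app_assoc; reflexivity).
      constructor; eauto.
    + destruct (inv_seq _ _ _ H1) as (u1 & v1 & E1 & P1 & Q1).
      destruct (inv_seq _ _ _ H2) as (u2 & v2 & E2 & P2 & Q2).
      destruct (split_l _ _ _ _ (eq_sym E1) (noocc _ _ P1 a)) as (s1 & F1 & G1).
      destruct (split_l _ _ _ _ (eq_sym E2) (noocc _ _ P2 a)) as (s2 & F2 & G2). subst.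
      rewrite <- app_assoc. constructor; eauto.
  - destruct (inv_star _ _ H1) as (n1 & K1). destruct (inv_star _ _ H2) as (n2 & K2).
    destruct (rpow_dec _ _ _ _ K1) as (u1 & l1' & r1' & v1 & E1 & E2 & A1 & B1 & C1).
    destruct (rpow_dec _ _ _ _ K2) as (u2 & l2' & r2' & v2 & E3 & E4 & A2 & B2 & C2).
    subst.
    replace ((u1 ++ l1') ++ x :: r2' ++ v2) with (u1 ++ ((l1' ++ x :: r2') ++ v2))
      by (rewrite <- !app_assoc; reflexivity).
    apply star_app; auto. apply star_cons; eauto.
Qed.
End S.

Theorem mainTheorem1 (A : Type) (eqd : forall a b : A, {a = b} + {a <> b})
  (g : regex A) (x : A) (xL xR yL yR : list A) :
  occ eqd x g = 1 ->
  lang g (xL ++ [x] ++ yR) ->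
  lang g (yL ++ [x] ++ xR) ->
  lang g (xL ++ [x] ++ xR).
Proof.
  intros Ho H1 H2. exact (main A eqd x g xL yR yL xR Ho H1 H2).
Qed.
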